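(* Let $\mathcal{T}$ be a tile set with consistent target frequencies $\{\alpha_T\}_{T\in\mathcal{T}}$, and let $p^*=p^*_{\mathcal{T}}$ be the maximum entropy distribution. For an entry $(i,j)$ write $\mathcal{T}(i,j)=\{T\in\mathcal{T}:(i,j)\in\mathrm{area}(T)\}$. Then $p^*(D)=\prod_{i,j}p^*\big((i,j)=D(i,j)\big)$ for all $D\in\mathcal{D}$, and there exist real numbers $\lambda_T$ ($T\in\mathcal{T}$) such that for every entry $(i,j)$ either $p^*((i,j)=1)\in\{0,1\}$ or \[ p^*((i,j)=1)=\frac{\exp\big(\sum_{T\in\mathcal{T}(i,j)}\lambda_T\big)}{\exp\big(\sum_{T\in\mathcal{T}(i,j)}\lambda_T\big)+1}. \]
   Context: Fix $n,m\ge1$; $\mathcal{D}$ is the set of all $n\times m$ binary matrices. A tile is $T=(t(T),a(T))$ with nonempty $t(T)\subseteq\{1..n\}$, $a(T)\subseteq\{1..m\}$, $\mathrm{area}(T)=t(T)\times a(T)$; $\mathrm{fr}(T;D)=\frac1{|\mathrm{area}(T)|}\sum_{(i,j)\in\mathrm{area}(T)}D(i,j)$, $\mathrm{fr}(T;p)=\sum_D p(D)\mathrm{fr}(T;D)$, $p((i,j)=v)=\sum_{D:D(i,j)=v}p(D)$. Given a finite tile set $\mathcal{T}$ with target frequencies $\alpha_T\in[0,1]$, let $\mathcal{P}=\{p:\mathrm{fr}(T;p)=\alpha_T\ \forall T\in\mathcal{T}\}$; the frequencies are consistent if $\mathcal{P}\neq\emptyset$. The maximum entropy distribution $p^*_{\mathcal{T}}$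 is the (unique) element of $\mathcal{P}$ maximising $H(p)=-\sum_D p(D)\log p(D)$ (natural logarithm, $0\log0=0$). *)

(* Defs.v *)
From Stdlib Require Import Reals.
From mathcomp Require Import all_boot.

Set Implicit Arguments.
Unset Strict Implicit.
Unset Printing Implicit Defensive.

Local Open Scope R_scope.

Section Defs.
Variables n m : nat.

Definition entry := ('I_n * 'I_m)%type.

Definition bmat := {ffun entry -> bool}.

(* A tile T = (t(T), a(T)); nonemptiness is imposed as a hypothesis on the tile set. *)
Definition tile := ({set 'I_n} * {set 'I_m})%type.

Definition area (T : tile) : {set entry} := setX T.1 T.2.

Definition distr := bmat -> R.

Definition is_distr (p : distr) : Prop :=
  (forall D, 0 <= p D) /\ \big[Rplus/0]_(D : bmat) p D = 1.

Definition fr_mat (T : tile) (D : bmat) : R :=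
  / INR #|area T| * \big[Rplus/0]_(e in area T) (if D e then 1 else 0).

Definition fr (T : tile) (p : distr) : R :=
  \big[Rplus/0]_(D : bmat) (p D * fr_mat T D).

Definition marg (p : distr) (e : entry) (v : bool) : R :=
  \big[Rplus/0]_(D : bmat | D e == v) p D.

Definition xlnx (x : R) : R := if Rle_dec x 0 then 0 else x * ln x.

Definition entropy (p : distr) : R := - \big[Rplus/0]_(D : bmat) xlnx (p D).

Definition inP (TT : {set tile}) (alpha : tile -> R) (p : distr) : Prop :=
  is_distr p /\ forall T, T \in TT -> fr T p = alpha T.

Definition is_maxent (TT : {set tile}) (alpha : tile -> R) (p : distr) : Prop :=
  inP TT alpha p /\ forall q, inP TT alpha q -> entropy q <= entropy p.

End Defs.

(* Main.v *)
Require Import Defs.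
From HB Require Import structures.
From Stdlib Require Import Reals Lra FunctionalExtensionality Classical.
From mathcomp Require Import all_boot.
From Coquelicot Require Import Coquelicot.
Local Open Scope R_scope.
Set Implicit Arguments.
Unset Strict Implicit.

Lemma RplusA_ : associative Rplus. Proof. move=> *; ring. Qed.
Lemma RmultA_ : associative Rmult. Proof. move=> *; ring. Qed.
HB.instance Definition _ := Monoid.isComLaw.Build R 0 Rplus RplusA_ Rplus_comm Rplus_0_l.
HB.instance Definition _ := Monoid.isComLaw.Build R 1 Rmult RmultA_ Rmult_comm Rmult_1_l.
HB.instance Definition _ := Monoid.isMulLaw.Build R 0 Rmult Rmult_0_l Rmult_0_r.
HB.instance Definition _ := Monoid.isAddLaw.Build R Rmult Rplus Rmult_plus_distr_r Rmult_plus_distr_l.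
Lemma der_smooth x d : 0 < x < 1 -> is_derive (fun t => -((x + t*d) * ln (x + t*d) + (1 - (x + t*d)) * ln (1 - (x+t*d)))) 0 (d * (ln (1-x) - ln x)).
Proof.
move=> hx. auto_derive; first lra.
rewrite Rmult_0_l Rplus_0_r (_ : 1 + - x = 1 - x); last ring.
field; lra.
Qed.
Lemma der_sum (I : Type) (r : seq I) (f : I -> R -> R) (f' : I -> R) x :
  (forall i, is_derive (f i) x (f' i)) ->
  is_derive (fun t => \big[Rplus/0]_(i <- r) f i t) x (\big[Rplus/0]_(i <- r) f' i).
Proof.
move=> H; elim: r => [|i r IH].
  rewrite big_nil; apply: (is_derive_ext (fun _ => 0)); first by move=> t; rewrite big_nil.
  exact: is_derive_const.
rewrite big_cons; apply: (is_derive_ext (fun t => f i t + \big[Rplus/0]_(j <- r) f j t)).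
  by move=> t; rewrite big_cons.
exact: is_derive_plus.
Qed.
Lemma locmax f S delta0 : is_derive f 0 S -> 0 < delta0 ->
  (forall t, Rabs t < delta0 -> f t <= f 0) -> S = 0.
Proof.
move=> /is_derive_Reals hd hdel hmax.
case: (Rtotal_order S 0) => [hS|[//|hS]].
- have he : 0 < - S / 2 by lra.
  have [del hdl] := hd _ he.
  pose h := - (Rmin delta0 del / 2).
  have hm1 := Rmin_l delta0 del; have hm2 := Rmin_r delta0 del.
  have hmp : 0 < Rmin delta0 del by apply: Rmin_glb_lt; [lra | exact: cond_pos].
  have hh : h < 0 by rewrite /h; lra.
  have habs : Rabs h = Rmin delta0 del / 2 by rewrite /h Rabs_Ropp Rabs_pos_eq; lra.
  have := hdl h (Rlt_not_eq _ _ hh) ltac:(rewrite habs; have := cond_pos del; lra).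
  have := hmax h ltac:(rewrite habs; lra).
  rewrite Rplus_0_l.
  move: (f h) (f 0) => a b hab.
  have -> : (a - b) / h = (b - a) / (- h) by field; lra.
  move=> H; have := Rabs_def2 _ _ H => [[H1 H2]].
  have : 0 <= (b - a) / - h by apply: Rdiv_le_0_compat; lra.
  lra.
- have he : 0 < S / 2 by lra.
  have [del hdl] := hd _ he.
  pose h := Rmin delta0 del / 2.
  have hm1 := Rmin_l delta0 del; have hm2 := Rmin_r delta0 del.
  have hmp : 0 < Rmin delta0 del by apply: Rmin_glb_lt; [lra | exact: cond_pos].
  have hh : 0 < h by rewrite /h; lra.
  have habs : Rabs h = h by rewrite Rabs_pos_eq; lra.
  have := hdl h (Rgt_not_eq _ _ hh) ltac:(rewrite habs /h; have := cond_pos del; lra).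
  have := hmax h ltac:(rewrite habs /h; lra).
  rewrite Rplus_0_l.
  move: (f h) (f 0) => a b hab.
  have -> : (a - b) / h = - ((b - a) / h) by field; lra.
  move=> H; have := Rabs_def2 _ _ H => [[H1 H2]].
  have : 0 <= (b - a) / h by apply: Rdiv_le_0_compat; lra.
  lra.
Qed.

Lemma small_pert x d t : 0 < x < 1 -> Rabs t < Rmin x (1 - x) / (Rabs d + 1) ->
  0 < x + t * d < 1.
Proof.
move=> hx ht.
have hm1 := Rmin_l x (1 - x); have hm2 := Rmin_r x (1 - x).
have hmp : 0 < Rmin x (1 - x) by apply: Rmin_glb_lt; lra.
have hd := Rabs_pos d; have ht0 := Rabs_pos t.
have h1 : Rabs t * (Rabs d + 1) < Rmin x (1 - x).
  have := Rmult_lt_compat_r (Rabs d + 1) _ _ ltac:(lra) ht.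
  rewrite /Rdiv Rmult_assoc Rinv_l; lra.
have h2 : Rabs (t * d) < Rmin x (1 - x) by rewrite Rabs_mult; nra.
have [h3 h4] := Rabs_def2 _ _ h2.
lra.
Qed.

Lemma der_term x d : (d = 0 \/ 0 < x < 1) ->
  is_derive (fun t => -(xlnx (x + t*d) + xlnx (1 - (x + t*d)))) 0 (d * (ln (1-x) - ln x)).
Proof.
case=> [->|hx].
  rewrite Rmult_0_l; apply: (is_derive_ext (fun _ => -(xlnx (x) + xlnx (1 - x)))).
    by move=> t; rewrite Rmult_0_r Rplus_0_r.
  exact: is_derive_const.
apply: is_derive_ext_loc; last exact: der_smooth.
have hmp : 0 < Rmin x (1 - x) by apply: Rmin_glb_lt; lra.
have hpos : 0 < Rmin x (1 - x) / (Rabs d + 1).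
  apply: Rdiv_lt_0_compat => //; have := Rabs_pos d; lra.
exists (mkposreal _ hpos) => t /= hb.
have ht : Rabs t < Rmin x (1 - x) / (Rabs d + 1).
  move: hb; rewrite /ball /= /AbsRing_ball /abs /minus /plus /opp /=; by rewrite Ropp_0 Rplus_0_r.
have [h1 h2] := small_pert hx ht.
rewrite /xlnx; destruct (Rle_dec (x + t * d) 0); first lra.
destruct (Rle_dec (1 - (x + t * d)) 0); first lra.
done.
Qed.

Section S.
Variables n m : nat.
Notation E := (entry n m).
Notation B := (bmat n m).

Lemma sumR_ge0 (I : Type) (r : seq I) (P : pred I) (F : I -> R) :
  (forall i, P i -> 0 <= F i) -> 0 <= \big[Rplus/0]_(i <- r | P i) F i.
Proof. move=> H; apply: big_ind => //; [lra | move=> *; lra]. Qed.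

Lemma prodR_ge0 (I : Type) (r : seq I) (P : pred I) (F : I -> R) :
  (forall i, P i -> 0 <= F i) -> 0 <= \big[Rmult/1]_(i <- r | P i) F i.
Proof. move=> H; apply: big_ind => //; [lra | move=> *; nra]. Qed.

Lemma prodR_gt0 (I : Type) (r : seq I) (P : pred I) (F : I -> R) :
  (forall i, P i -> 0 < F i) -> 0 < \big[Rmult/1]_(i <- r | P i) F i.
Proof. move=> H; apply: big_ind => //; [lra | move=> *; nra]. Qed.

Lemma sumR_le (I : Type) (r : seq I) (P : pred I) (F G : I -> R) :
  (forall i, P i -> F i <= G i) ->
  \big[Rplus/0]_(i <- r | P i) F i <= \big[Rplus/0]_(i <- r | P i) G i.
Proof. move=> H; apply: big_ind2 => //; [lra | move=> *; lra]. Qed.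

Lemma sumR_opp (I : Type) (r : seq I) (P : pred I) (F : I -> R) :
  \big[Rplus/0]_(i <- r | P i) (- F i) = - \big[Rplus/0]_(i <- r | P i) F i.
Proof. symmetry; apply: (big_morph Ropp Ropp_plus_distr Ropp_0). Qed.

Lemma sumR_eq0 (I : finType) (F : I -> R) :
  (forall i, 0 <= F i) -> \big[Rplus/0]_(i : I) F i = 0 -> forall i, F i = 0.
Proof.
move=> H0 Hs i; move: Hs; rewrite (bigD1 i) //=.
have := @sumR_ge0 I (index_enum I) (fun j => j != i) F (fun j _ => H0 j) => /= ?.
have := H0 i; lra.
Qed.

Lemma sumR_bool (F : bool -> R) : \big[Rplus/0]_(b : bool) F b = F true + F false.
Proof. by rewrite big_bool. Qed.

Lemma distrR (I J : finType) (F : I -> J -> R) :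
  \big[Rmult/1]_(i : I) \big[Rplus/0]_(j : J) F i j
    = \big[Rplus/0]_(f : {ffun I -> J}) \big[Rmult/1]_i F i (f i).
Proof. exact: bigA_distr_bigA. Qed.

Lemma sumR_distrr (I : Type) (r : seq I) (P : pred I) (F : I -> R) c :
  c * \big[Rplus/0]_(i <- r | P i) F i = \big[Rplus/0]_(i <- r | P i) (c * F i).
Proof. exact: big_distrr. Qed.
Lemma sumR_distrl (I : Type) (r : seq I) (P : pred I) (F : I -> R) c :
  \big[Rplus/0]_(i <- r | P i) F i * c = \big[Rplus/0]_(i <- r | P i) (F i * c).
Proof. exact: big_distrl. Qed.
Lemma sumR_split (I : Type) (r : seq I) (P : pred I) (F G : I -> R) :
  \big[Rplus/0]_(i <- r | P i) (F i + G i) =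
  \big[Rplus/0]_(i <- r | P i) F i + \big[Rplus/0]_(i <- r | P i) G i.
Proof. exact: big_split. Qed.

Lemma sumR_minus (I : Type) (r : seq I) (P : pred I) (F G : I -> R) :
  \big[Rplus/0]_(i <- r | P i) (F i - G i) =
  \big[Rplus/0]_(i <- r | P i) F i - \big[Rplus/0]_(i <- r | P i) G i.
Proof. rewrite /Rminus sumR_split sumR_opp //. Qed.

Lemma prod_sum1 (b : E -> bool -> R) : (forall e, b e true + b e false = 1) ->
  \big[Rplus/0]_(D : B) \big[Rmult/1]_(e : E) b e (D e) = 1.
Proof.
move=> hb; rewrite -((@distrR E bool (fun e w => b e w))).
by rewrite big1 // => e _; rewrite sumR_bool hb.
Qed.

Lemma prod_marg (b : E -> bool -> R) : (forall e, b e true + b e false = 1) ->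
  forall e0 v, marg (fun D : B => \big[Rmult/1]_(e : E) b e (D e)) e0 v = b e0 v.
Proof.
move=> hb e0 v; rewrite /marg big_mkcond /=.
pose b' e w := if e == e0 then (if w == v then b e w else 0) else b e w.
transitivity (\big[Rplus/0]_(D : B) \big[Rmult/1]_(e : E) b' e (D e)).
  apply: eq_bigr => D _; case: eqP => HD.
    apply: eq_bigr => e _; rewrite /b'; case: eqP => // ->; by rewrite HD eqxx.
  rewrite (bigD1 e0) //= /b' eqxx; case: eqP => //= _; by rewrite Rmult_0_l.
  idtac.
rewrite -((@distrR E bool (fun e w => b' e w))) (bigD1 e0) //.
have -> : \big[Rmult/1]_(e | true && (e != e0)) \big[Rplus/0]_(w : bool) b' e w = 1.
  apply: big1 => e he; rewrite sumR_bool /b' (negbTE he); exact: hb.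
rewrite sumR_bool /b' eqxx; clear b'; case: v; rewrite /= ?Rplus_0_r ?Rplus_0_l; lra.
Qed.

Lemma marg_sum (p : distr n m) : is_distr p -> forall e, marg p e true + marg p e false = 1.
Proof.
move=> [_ h1] e; rewrite -h1 (bigID (fun D : B => D e)) /= /marg.
congr (_ + _); apply: eq_bigl => D; by case: (D e).
Qed.

Lemma marg_ge0 (p : distr n m) : is_distr p -> forall e v, 0 <= marg p e v.
Proof. move=> [h0 _] e v; exact: sumR_ge0. Qed.

Lemma fr_marg (p : distr n m) T :
  fr T p = / INR #|area T| * \big[Rplus/0]_(e in area T) marg p e true.
Proof.
rewrite /fr /fr_mat.
transitivity (\big[Rplus/0]_(D : B) \big[Rplus/0]_(e in area T) (/ INR #|area T| * (p D * (if D e then 1 else 0)))).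
  apply: eq_bigr => D _; rewrite sumR_distrr sumR_distrr; apply: eq_bigr => e _; ring.
rewrite exchange_big /= sumR_distrr; apply: eq_bigr => e _; rewrite -sumR_distrr; congr (_ * _).
rewrite /marg [RHS]big_mkcond /=; apply: eq_bigr => D _; case: (D e) => /=; lra.
Qed.

Definition Lg (a : R) : R := if Rle_dec a 0 then 0 else ln a.

Lemma xlnx_Lg a : xlnx a = a * Lg a.
Proof. rewrite /xlnx /Lg; destruct (Rle_dec a 0) => /=; [ring | done]. Qed.

Lemma Lg_pos a : 0 < a -> Lg a = ln a.
Proof. rewrite /Lg => h; destruct (Rle_dec a 0) => //=; lra. Qed.

Lemma ln_prod (F : E -> R) : (forall e, 0 < F e) ->
  ln (\big[Rmult/1]_(e : E) F e) = \big[Rplus/0]_(e : E) ln (F e).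
Proof.
move=> H.
suff : 0 < \big[Rmult/1]_(e : E) F e /\ ln (\big[Rmult/1]_(e : E) F e) = \big[Rplus/0]_(e : E) ln (F e) by case.
apply: (@big_ind2 R R (fun P S => 0 < P /\ ln P = S)).
- split; [lra | exact: ln_1].
- move=> x1 x2 y1 y2 [h1 e1] [h2 e2]; split; first nra.
  by rewrite ln_mult // e1 e2.
- move=> e _; split; [exact: H | done].
Qed.

Definition prodm (p : distr n m) : distr n m :=
  fun D => \big[Rmult/1]_(e : E) marg p e (D e).

Lemma le_marg (p : distr n m) : is_distr p -> forall (D : B) e, p D <= marg p e (D e).
Proof.
move=> [h0 _] D e; rewrite /marg (bigD1 D) //=.
rewrite -{1}(Rplus_0_r (p D)); apply: Rplus_le_compat_l; apply: sumR_ge0 => ? _; exact: h0.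
Qed.

Lemma prodm_pos_or (p : distr n m) : is_distr p -> forall D : B,
  (forall e, 0 < marg p e (D e)) \/ p D = 0.
Proof.
move=> hp D; case: (classic (forall e, 0 < marg p e (D e))) => H; [by left | right].
have [e He] := not_all_ex_not _ _ H.
have := marg_ge0 hp e (D e); have := le_marg hp D e; have := (proj1 hp) D; lra.
Qed.

Lemma cross (p : distr n m) : is_distr p ->
  \big[Rplus/0]_(D : B) (p D * Lg (prodm p D)) =
  \big[Rplus/0]_(e : E) \big[Rplus/0]_(v : bool) xlnx (marg p e v).
Proof.
move=> hp.
transitivity (\big[Rplus/0]_(D : B) \big[Rplus/0]_(e : E) (p D * Lg (marg p e (D e)))).
  apply: eq_bigr => D _; rewrite -sumR_distrr.
  case: (prodm_pos_or hp D) => [H|->]; last by rewrite !Rmult_0_l.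
  congr (_ * _); rewrite /prodm.
  have Hp : 0 < \big[Rmult/1]_(e : E) marg p e (D e) by apply: prodR_gt0.
  rewrite Lg_pos // ln_prod; last exact: H.
  apply: eq_bigr => e _; by rewrite Lg_pos.
rewrite exchange_big /=; apply: eq_bigr => e _.
rewrite (bigID (fun D : B => D e)) /= sumR_bool.
rewrite !xlnx_Lg /marg.
congr (_ + _).
  rewrite sumR_distrl; apply: eq_big => [D|D HD]; first by case: (D e).
  by rewrite HD.
rewrite sumR_distrl; apply: eq_big => [D|D HD]; first by case: (D e).
by rewrite (negbTE HD).
Qed.

Lemma prodm_distr (p : distr n m) : is_distr p -> is_distr (prodm p).
Proof.
move=> hp; split.
  move=> D; apply: prodR_ge0 => e _; exact: marg_ge0.
rewrite /prodm; exact (prod_sum1 (marg_sum hp)).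
Qed.

Lemma prodm_marg (p : distr n m) : is_distr p -> forall e v, marg (prodm p) e v = marg p e v.
Proof. move=> hp e v; rewrite /prodm; exact (prod_marg (marg_sum hp) e v). Qed.

Lemma exp_ge (u : R) : 1 + u <= exp u.
Proof. exact: exp_ineq1_le. Qed.

Lemma gibbs (p : distr n m) : is_distr p ->
  \big[Rplus/0]_(D : B) (p D * Lg (prodm p D)) <= \big[Rplus/0]_(D : B) xlnx (p D) /\
  (\big[Rplus/0]_(D : B) (p D * Lg (prodm p D)) = \big[Rplus/0]_(D : B) xlnx (p D) ->
   forall D, p D = prodm p D).
Proof.
move=> hp; have hq := prodm_distr hp.
pose t D := xlnx (p D) - p D * Lg (prodm p D) - (p D - prodm p D).
have tge : forall D, 0 <= t D /\ (t D = 0 -> p D = prodm p D).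
  move=> D; rewrite /t xlnx_Lg.
  have hq0 := (proj1 hq) D; have hp0 := (proj1 hp) D.
  case: (prodm_pos_or hp D) => [H|H0]; last first.
    rewrite H0 !Rmult_0_l; split; lra.
  have Hq : 0 < prodm p D by apply: prodR_gt0.
  case: (Req_dec (p D) 0) => [H0|Hne].
    rewrite H0 !Rmult_0_l; split; lra.
  have Hp : 0 < p D by lra.
  rewrite !Lg_pos //.
  move: Hp Hq; move: (p D) (prodm p D) => a b Hp Hq.
  have hu : b = a * exp (ln b - ln a).
    rewrite exp_plus exp_Ropp !exp_ln //; field; apply: Rgt_not_eq; lra.
  have eq : a * ln a - a * ln b - (a - b) = a * (exp (ln b - ln a) - 1 - (ln b - ln a)).
    rewrite Rmult_minus_distr_l Rmult_minus_distr_l -hu; ring.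
  move: eq; move: (ln b - ln a) hu => u hu eq.
  rewrite eq; split.
    have := exp_ge u; nra.
  move=> h0; have : exp u - 1 - u = 0.
    apply: (Rmult_eq_reg_l a); [lra | apply: Rgt_not_eq; lra].
  case: (Req_dec u 0) => [hu0|hu0]; last by have := exp_ineq1 u hu0; lra.
  move=> _; rewrite hu hu0 exp_0; ring.
have Hsum : \big[Rplus/0]_(D : B) t D =
   \big[Rplus/0]_(D : B) xlnx (p D) - \big[Rplus/0]_(D : B) (p D * Lg (prodm p D)).
  rewrite /t !sumR_minus (_ : \big[Rplus/0]_(D : B) p D = 1); last exact: (proj2 hp).
  rewrite (_ : \big[Rplus/0]_(D : B) prodm p D = 1); last exact: (proj2 hq).
  by rewrite {3}/Rminus Rplus_opp_r Rminus_0_r.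
have hge : 0 <= \big[Rplus/0]_(D : B) t D by apply: sumR_ge0 => D _; exact: (proj1 (tge D)).
split; first lra.
move=> heq D; apply: (proj2 (tge D)).
apply: (@sumR_eq0 B t (fun D => proj1 (tge D))); rewrite Hsum heq; ring.
Qed.

Lemma prodm_idem (p : distr n m) : is_distr p -> forall D, prodm (prodm p) D = prodm p D.
Proof. move=> hp D; rewrite /prodm; apply: eq_bigr => e _; exact: prodm_marg. Qed.

Lemma ent_prodm (p : distr n m) : is_distr p ->
  \big[Rplus/0]_(D : B) xlnx (prodm p D) = \big[Rplus/0]_(D : B) (p D * Lg (prodm p D)).
Proof.
move=> hp; rewrite (cross hp).
transitivity (\big[Rplus/0]_(D : B) (prodm p D * Lg (prodm (prodm p) D))).
  apply: eq_bigr => D _; rewrite xlnx_Lg prodm_idem //.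
rewrite (cross (prodm_distr hp)); apply: eq_bigr => e _; apply: eq_bigr => v _.
by rewrite prodm_marg.
Qed.

Lemma fr_prodm (p : distr n m) T : is_distr p -> fr T (prodm p) = fr T p.
Proof.
move=> hp; rewrite !fr_marg; congr (_ * _); apply: eq_bigr => e _; exact: prodm_marg.
Qed.

Lemma part1 TT alpha (p : distr n m) : is_maxent TT alpha p -> forall D, p D = prodm p D.
Proof.
move=> [[hp hfr] hmax].
have hq : inP TT alpha (prodm p).
  split; first exact: prodm_distr.
  move=> T hT; rewrite fr_prodm //; exact: hfr.
have := hmax _ hq; rewrite /entropy ent_prodm // => hle.
have [hg heq] := gibbs hp.
apply: heq; lra.
Qed.

End S.

Section LA.
Variable T : finType.

Definition dotv (u v : T -> R) := \big[Rplus/0]_(x : T) (u x * v x).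

Fixpoint in_span (vs : seq (T -> R)) (g : T -> R) : Prop :=
  match vs with
  | [::] => forall x, g x = 0
  | v :: vs' => exists c, in_span vs' (fun x => g x - c * v x)
  end.

Lemma in_span_ext vs g h : (forall x, g x = h x) -> in_span vs g -> in_span vs h.
Proof.
elim: vs g h => [|v vs IH] g h Hgh /=.
  by move=> H x; rewrite -Hgh.
move=> [c Hc]; exists c; apply: IH Hc => x; by rewrite Hgh.
Qed.

Lemma dotv_sym u v : dotv u v = dotv v u.
Proof. apply: eq_bigr => x _; ring. Qed.

Lemma dotv_lin_l u w z c : dotv (fun x => u x - c * w x) z = dotv u z - c * dotv w z.
Proof.
rewrite /dotv sumR_distrr -sumR_minus; apply: eq_bigr => x _; ring.
Qed.

Lemma dotv_lin_r u w z c : dotv z (fun x => u x - c * w x) = dotv z u - c * dotv z w.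
Proof.
rewrite /dotv sumR_distrr -sumR_minus; apply: eq_bigr => x _; ring.
Qed.

Lemma dotv_self0 a : dotv a a = 0 -> forall x, a x = 0.
Proof.
move=> H x.
have := @sumR_eq0 T (fun x => a x * a x) (fun x => ltac:(nra)) H x.
nra.
Qed.

Lemma span_lift a N (vs : seq (T -> R)) h :
  let proj := fun (v : T -> R) x => v x - (dotv v a / N) * a x in
  in_span (map proj vs) h -> exists k, in_span vs (fun x => h x + k * a x).
Proof.
move=> proj; elim: vs h => [|v vs IH] h /=.
  move=> H; exists 0 => x; rewrite H; ring.
move=> [c Hc]; have [k Hk] := IH _ Hc.
exists (k + c * (dotv v a / N)); exists c.
apply: in_span_ext Hk => x; rewrite /proj; ring.
Qed.

Lemma span_of_orth (vs : seq (T -> R)) g :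
  (forall d, (forall v, List.In v vs -> dotv v d = 0) -> dotv g d = 0) -> in_span vs g.
Proof.
move: {2}(size vs) (erefl (size vs)) => k; elim: k vs g => [|k IHk] [|a vs] g //= Hsz H.
  apply: dotv_self0; apply: H => v [].
case: Hsz => Hsz.
have IH : forall vs' g', size vs' = size vs -> (forall d, (forall v, List.In v vs' -> dotv v d = 0) -> dotv g' d = 0) -> in_span vs' g'.
  move=> vs' g' hs; apply: IHk; by rewrite hs.
case: (Req_dec (dotv a a) 0) => [HN|HN].
  have Ha := dotv_self0 HN.
  exists 0; apply: IH => // d Hd.
  rewrite dotv_lin_l Rmult_0_l Rminus_0_r; apply: H => v [<-|Hv]; last exact: Hd.
  rewrite /dotv big1 // => x _; rewrite Ha; ring.
pose N := dotv a a.
pose proj := fun (v : T -> R) x => v x - (dotv v a / N) * a x.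
have Hg' : in_span (map proj vs) (proj g).
  apply: IH; first by rewrite size_map.
  move=> d Hd.
  pose d' := fun x => d x - (dotv d a / N) * a x.
  have had : dotv a d' = 0.
    rewrite /d' dotv_lin_r (dotv_sym a d) /N; field; exact: HN.
  have hvd : forall v, List.In v vs -> dotv v d' = 0.
    move=> v Hv; have := Hd (proj v) (List.in_map proj _ _ Hv).
    rewrite /proj /d' dotv_lin_l dotv_lin_r (dotv_sym a d) (dotv_sym v a) => <-; rewrite /Rdiv; ring.
  have hgd : dotv g d' = 0.
    apply: H => v [<-|Hv]; [exact: had | exact: hvd].
  move: hgd; rewrite /proj /d' dotv_lin_l dotv_lin_r (dotv_sym a d) (dotv_sym g a) => <-; rewrite /Rdiv; ring.
have [k0 Hk] := span_lift (a:=a) (N:=N) Hg'.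
exists (dotv g a / N - k0); apply: in_span_ext Hk => x; rewrite /proj; ring.
Qed.

End LA.

Lemma span_coeffs (I : eqType) (T : finType) (a : I -> T -> R) (s : seq I) g :
  uniq s -> in_span (map a s) g ->
  exists mu : I -> R, forall x, g x = \big[Rplus/0]_(i <- s) (mu i * a i x).
Proof.
elim: s g => [|i0 s IH] g /=.
  move=> _ H; exists (fun _ => 0) => x; by rewrite big_nil H.
move=> /andP [hi0 hs] [c Hc]; have [mu Hmu] := IH _ hs Hc.
exists (fun i => if i == i0 then c else mu i) => x.
rewrite big_cons eqxx.
rewrite (eq_big_seq (fun i => mu i * a i x)); last first.
  move=> i hi; case: eqP => // ei; by move: hi; rewrite ei (negbTE hi0).
rewrite -Hmu; ring.
Qed.

Lemma fin_delta (I : finType) (Q : I -> R -> Prop) :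
  (forall i, exists del, 0 < del /\ forall t, Rabs t < del -> Q i t) ->
  exists del, 0 < del /\ forall t, Rabs t < del -> forall i, Q i t.
Proof.
move=> H.
suff : forall s : seq I, exists del, 0 < del /\ forall t, Rabs t < del -> forall i, i \in s -> Q i t.
  move=> /(_ (enum I)) [del [hd Hd]]; exists del; split => // t ht i.
  by apply: Hd; rewrite ?mem_enum.
elim=> [|i0 s [del [hd Hd]]].
  exists 1; split; [lra | move=> t _ i; by rewrite in_nil].
have [d0 [h0 H0]] := H i0.
exists (Rmin d0 del); split; first by apply: Rmin_glb_lt.
move=> t ht i; rewrite in_cons => /orP [/eqP ->|hi].
  apply: H0; have := Rmin_l d0 del; lra.
apply: Hd => //; have := Rmin_r d0 del; lra.
Qed.

Lemma prod_ent n m (b : entry n m -> bool -> R) :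
  (forall e, b e true + b e false = 1) -> (forall e v, 0 <= b e v) ->
  \big[Rplus/0]_(D : bmat n m) xlnx (\big[Rmult/1]_(e : entry n m) b e (D e)) =
  \big[Rplus/0]_(e : entry n m) \big[Rplus/0]_(v : bool) xlnx (b e v).
Proof.
move=> hb hb0.
pose P : distr n m := fun D => \big[Rmult/1]_(e : entry n m) b e (D e).
have hP : is_distr P.
  split; first by move=> D; apply: prodR_ge0.
  exact (prod_sum1 hb).
have hm := prod_marg hb.
have hpm : forall D, prodm P D = P D.
  move=> D; rewrite /prodm; apply: eq_bigr => e _; exact: hm.
transitivity (\big[Rplus/0]_(D : bmat n m) (P D * Lg (prodm P D))).
  apply: eq_bigr => D _; by rewrite hpm xlnx_Lg.
rewrite (cross hP); apply: eq_bigr => e _; apply: eq_bigr => v _; by rewrite hm.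
Qed.

Lemma pert n m TT alpha (p : distr n m) (Hp : is_maxent TT alpha p) (d : entry n m -> R)
  (hd : forall e, d e = 0 \/ 0 < marg p e true < 1)
  (hker : forall T, T \in TT -> \big[Rplus/0]_(e in area T) d e = 0) :
  \big[Rplus/0]_(e : entry n m) (d e * (ln (1 - marg p e true) - ln (marg p e true))) = 0.
Proof.
have hp := proj1 (proj1 Hp).
have hfr := proj2 (proj1 Hp).
have hmax := proj2 Hp.
pose x e := marg p e true.
have hx : forall e, 0 <= x e <= 1.
  move=> e; have := marg_sum hp e; have := marg_ge0 hp e true; have := marg_ge0 hp e false.
  rewrite /x; lra.
pose bb (t : R) e (v : bool) := if v then x e + t * d e else 1 - (x e + t * d e).
have hsum : forall t e, bb t e true + bb t e false = 1 by move=> t e; rewrite /bb; ring.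
pose q t : distr n m := fun D => \big[Rmult/1]_(e : entry n m) bb t e (D e).
have [del [hdel Hdel]] : exists del, 0 < del /\ forall t, Rabs t < del -> forall e, 0 <= x e + t * d e <= 1.
  apply: fin_delta => e; case: (hd e) => [he|he].
    exists 1; split; first lra; move=> t _; rewrite he Rmult_0_r Rplus_0_r; exact: hx.
  have hmp : 0 < Rmin (x e) (1 - x e) by apply: Rmin_glb_lt; rewrite /x; lra.
  exists (Rmin (x e) (1 - x e) / (Rabs (d e) + 1)); split.
    apply: Rdiv_lt_0_compat => //; have := Rabs_pos (d e); lra.
  move=> t ht; have := small_pert he ht; rewrite /x; lra.
pose phi t := \big[Rplus/0]_(e : entry n m) (-(xlnx (x e + t * d e) + xlnx (1 - (x e + t * d e)))).
have hent : forall t, Rabs t < del -> entropy (q t) = phi t.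
  move=> t ht; rewrite /entropy /q prod_ent //; last first.
    move=> e [|]; rewrite /bb; have := Hdel t ht e; lra.
  rewrite -sumR_opp; apply: eq_bigr => e _; by rewrite sumR_bool.
have hq0 : forall D, p D = q 0 D.
  move=> D; rewrite (part1 Hp D) /prodm /q; apply: eq_bigr => e _.
  rewrite /bb Rmult_0_l Rplus_0_r; case: (D e) => //.
  rewrite /x; have := marg_sum hp e; lra.
have hloc : forall t, Rabs t < del -> phi t <= phi 0.
  move=> t ht; rewrite -hent // -hent; last by rewrite Rabs_R0.
  have -> : entropy (q 0) = entropy p by rewrite /entropy; apply: f_equal; apply: eq_bigr => D _; rewrite hq0.
  apply: hmax; split.
    split.
      move=> D; apply: prodR_ge0 => e _; case: (D e); rewrite /bb; have := Hdel t ht e; lra.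
    exact (prod_sum1 (hsum t)).
  move=> T hT; rewrite -(hfr T hT) !fr_marg; congr (_ * _).
  rewrite /q; under eq_bigr => e _ do rewrite (prod_marg (hsum t)) /bb.
  rewrite sumR_split -sumR_distrr (hker T hT) Rmult_0_r Rplus_0_r //.
apply: (locmax (f := phi)) hdel hloc.
apply: der_sum => e; exact: der_term (hd e).
Qed.

Lemma In_of_mem (I : eqType) (x : I) (s : seq I) : x \in s -> List.In x s.
Proof.
elim: s => [|y s IH] //=; rewrite in_cons => /orP [/eqP ->|h]; [by left | right; exact: IH].
Qed.

Unset Implicit Arguments.
Set Strict Implicit.

Theorem theorem2 (n m : nat) (hn : (1 <= n)%nat) (hm : (1 <= m)%nat)
  (TT : {set tile n m}) (alpha : tile n m -> R)
  (Hnonempty : forall T, T \in TT -> T.1 != set0 /\ T.2 != set0)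
  (Halpha : forall T, T \in TT -> 0 <= alpha T <= 1)
  (Hcons : exists q, inP TT alpha q)
  (p : distr n m) (Hp : is_maxent TT alpha p) :
  (forall D : bmat n m,
      p D = \big[Rmult/1]_(e : entry n m) marg p e (D e)) /\
  exists lam : tile n m -> R,
    forall e : entry n m,
      marg p e true = 0 \/ marg p e true = 1 \/
      marg p e true =
        exp (\big[Rplus/0]_(T in TT | e \in area T) lam T) /
        (exp (\big[Rplus/0]_(T in TT | e \in area T) lam T) + 1).
Proof.
split; first exact: (part1 Hp).
have hp := proj1 (proj1 Hp).
pose x e := marg p e true.
have hx : forall e, 0 <= x e <= 1.
  move=> e; have := marg_sum hp e; have := marg_ge0 hp e true; have := marg_ge0 hp e false.
  rewrite /x; lra.
pose inF e := is_left (Rlt_dec 0 (x e)) && is_left (Rlt_dec (x e) 1).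
have inFP : forall e, inF e -> 0 < x e < 1.
  move=> e; rewrite /inF; case: (Rlt_dec 0 (x e)); case: (Rlt_dec (x e) 1) => //= *; lra.
have inFN : forall e, ~~ inF e -> x e = 0 \/ x e = 1.
  move=> e; rewrite /inF; have := hx e.
  case: (Rlt_dec 0 (x e)); case: (Rlt_dec (x e) 1) => //= *; lra.
pose a (T : tile n m) (e : entry n m) : R := if (e \in area T) && inF e then 1 else 0.
pose gv (e : entry n m) : R := if inF e then ln (1 - x e) - ln (x e) else 0.
have Horth : forall d, (forall v, List.In v (map a (enum TT)) -> dotv v d = 0) -> dotv gv d = 0.
  move=> d Hd.
  pose d' e := if inF e then d e else 0.
  have hd : forall e, d' e = 0 \/ 0 < marg p e true < 1.
    move=> e; rewrite /d'; case he: (inF e); [right; exact: inFP | by left].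
  transitivity (\big[Rplus/0]_(e : entry n m) (d' e * (ln (1 - marg p e true) - ln (marg p e true)))).
    apply: eq_bigr => e _; rewrite /gv /d' /x; case: (inF e); ring.
  apply: (@pert n m TT alpha p Hp d' hd).
  move=> T hT; have := Hd (a T) (List.in_map a _ _ (@In_of_mem _ T (enum TT) ltac:(by rewrite mem_enum))).
  move=> Hz; transitivity (dotv (a T) d); last exact: Hz.
  rewrite /dotv big_mkcond /=; apply: eq_bigr => e _.
  rewrite /a /d'; case: (e \in area T); case: (inF e) => /=; ring.
have Hspan := span_of_orth Horth.
have [mu Hmu] := span_coeffs (enum_uniq (mem TT)) Hspan.
exists (fun T => - mu T) => e.
case hF: (inF e); last first.
  have := inFN e; rewrite hF => /(_ isT) [h|h]; [left | right; left]; exact: h.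
right; right.
have [h0 h1] := inFP e hF.
have Hs : ln (1 - x e) - ln (x e) = \big[Rplus/0]_(T in TT | e \in area T) mu T.
  have := Hmu e; rewrite /gv hF => ->.
  rewrite big_enum /= big_mkcondr /=; apply: eq_bigr => T _.
  rewrite /a hF andbT; case: (e \in area T) => /=; ring.
rewrite sumR_opp -Hs.
rewrite exp_Ropp exp_plus exp_Ropp !exp_ln; try lra.
rewrite -/(x e); field; split; lra.
Qed.
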